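(* Let $a>0$, $b>0$, $T>0$, let $f$ be a $1$-periodic, twice continuously differentiable function with $\kappa=\inf_{0\le t\le1}f(t)>0$, and let $\vartheta>0$. For $\varepsilon>0$ let $\gamma(\vartheta,\cdot)$ be the solution on $[0,T]$ of the Riccati equation $$\frac{\partial\gamma(\vartheta,t)}{\partial t}=-2a\gamma(\vartheta,t)-\frac{\gamma(\vartheta,t)^2f(\vartheta t)^2}{\varepsilon^2}+b^2,\qquad\gamma(\vartheta,0)=0.$$ Then for any $t_0\in(0,T]$, $$\sup_{t_0\le t\le T}\Big|\gamma(\vartheta,t)-\frac{b\,\varepsilon}{f(\vartheta t)}\Big|=O(\varepsilon^2)\quad\text{as }\varepsilon\to0.$$
   Context: $\gamma(\vartheta,t)$ is the variance of the Kalman–Bucy filtering error for the signal $Y_t$ (an Ornstein–Uhlenbeck process $dY_t=-aY_tdt+b\,dV_t$) observed through $dX_t=f(\vartheta t)Y_tdt+\varepsilon dW_t$. *)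

(* Defs.v *)
From Stdlib Require Import Reals.
From Coquelicot Require Import Coquelicot.
Open Scope R_scope.

Definition C2 (f : R -> R) : Prop :=
  forall x, ex_derive f x /\ ex_derive (Derive f) x /\
            continuous (Derive_n f 2) x.

Definition periodic1 (f : R -> R) : Prop := forall t, f (t + 1) = f t.

Definition riccati_solution (a b theta eps T : R) (f g : R -> R) : Prop :=
  g 0 = 0 /\
  (forall t, 0 <= t <= T -> continuous g t) /\
  (forall t, 0 < t < T ->
     is_derive g t (- 2 * a * g t - (g t) ^ 2 * (f (theta * t)) ^ 2 / eps ^ 2 + b ^ 2)).

(* Main.v *)
Require Import Defs.
From Stdlib Require Import Reals Lra Psatz ZArith.
From Coquelicot Require Import Coquelicot.
Open Scope R_scope.
Lemma cont_eps (h : R -> R) t : continuous h t ->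
  forall e, 0 < e -> exists d, 0 < d /\ forall y, Rabs (y - t) < d -> Rabs (h y - h t) < e.
Proof.
  intros Hc e He.
  apply continuity_pt_filterlim in Hc.
  unfold continuity_pt, continue_in, limit1_in, limit_in in Hc.
  destruct (Hc e He) as [d [Hd Hy]].
  exists d; split; auto. intros y Hy'.
  destruct (Req_dec y t) as [->|Hne].
  - unfold Rminus; rewrite Rplus_opp_r, Rabs_R0; auto.
  - apply (Hy y). split. unfold D_x, no_cond. split; auto. exact Hy'.
Qed.

Lemma barrier (h : R -> R) (T : R) :
  0 < h 0 ->
  (forall t, 0 <= t <= T -> continuous h t) ->
  (forall t, 0 < t < T -> h t = 0 -> exists d, is_derive h t d /\ 0 < d) ->
  forall t, 0 <= t < T -> 0 < h t.
Proof.
  intros H0 Hc Hd s Hs.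
  destruct (Rlt_or_le 0 (h s)) as [Hp|Hn]; auto. exfalso.
  set (E := fun t => 0 <= t <= s /\ forall u, 0 <= u <= t -> 0 < h u).
  assert (Eb : bound E) by (exists s; intros t [Ht _]; lra).
  assert (Ee : exists x, E x).
  { exists 0. split. lra. intros u Hu. replace u with 0 by lra. auto. }
  destruct (completeness E Eb Ee) as [tau [Hub Hlub]].
  assert (Ht0 : 0 <= tau) by (apply Hub; destruct Ee as [x _]; split; [lra|]; intros u Hu; replace u with 0 by lra; auto).
  assert (Hts : tau <= s) by (apply Hlub; intros t [Ht _]; lra).
  assert (Hi : forall u, 0 <= u < tau -> 0 < h u).
  { intros u Hu. destruct (Classical_Prop.classic (exists t, E t /\ u < t)) as [[t [[Et1 Et2] Ht]]|Hno].
    - apply Et2; lra.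
    - assert (tau <= u); [|lra]. apply Hlub. intros t Et.
      destruct (Rle_or_lt t u); auto. exfalso; apply Hno; exists t; auto. }
  assert (Hcont : continuous h tau) by (apply Hc; lra).
  destruct (Rtotal_order (h tau) 0) as [Hneg|[Hz|Hpos]].
  - destruct (cont_eps h tau Hcont (- h tau)) as [d [Hdp Hdd]]; [lra|].
    destruct (Req_dec tau 0) as [E0|E0]. { rewrite E0 in Hneg; lra. }
    set (y := Rmax (tau - d/2) 0).
    assert (Hy1 : 0 <= y < tau) by (unfold y; unfold Rmax; destruct Rle_dec; lra).
    assert (Hy2 : Rabs (y - tau) < d) by (unfold y, Rmax; destruct Rle_dec; apply Rabs_def1; lra).
    specialize (Hdd y Hy2). specialize (Hi y Hy1).
    apply Rabs_def2 in Hdd. lra.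
  - destruct (Req_dec tau 0) as [E0|E0]. { rewrite E0 in Hz; lra. }
    destruct (Hd tau) as [dd [Hder Hdpos]]; [lra|auto|].
    apply is_derive_Reals in Hder.
    destruct (Hder dd Hdpos) as [del Hdel].
    set (hh := - Rmin del tau / 2).
    assert (Hmin : 0 < Rmin del tau) by (apply Rmin_glb_lt; [apply cond_pos|lra]).
    assert (Hm1 : Rmin del tau <= del) by apply Rmin_l.
    assert (Hm2 : Rmin del tau <= tau) by apply Rmin_r.
    assert (hh <> 0) by (unfold hh; lra).
    assert (Rabs hh < del) by (unfold hh; apply Rabs_def1; lra).
    specialize (Hdel hh H H1). rewrite Hz in Hdel.
    apply Rabs_def2 in Hdel.
    assert (0 < h (tau + hh)) by (apply Hi; unfold hh; lra).
    assert (0 < (h (tau + hh) - 0) / hh) by lra.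
    unfold Rdiv in H3. rewrite Rminus_0_r in H3.
    assert (hh < 0) by (unfold hh; lra).
    assert (/ hh < 0) by (apply Rinv_lt_0_compat; lra).
    nra.
  - destruct (Req_dec tau s) as [Es|Es]. { subst; lra. }
    destruct (cont_eps h tau Hcont (h tau)) as [d [Hdp Hdd]]; [lra|].
    set (t' := Rmin (tau + d/2) s).
    assert (Et' : E t').
    { split. unfold t', Rmin; destruct Rle_dec; lra.
      intros u Hu. destruct (Rlt_or_le u tau). apply Hi; lra.
      assert (Hud : Rabs (u - tau) < d) by (unfold t', Rmin in Hu; destruct Rle_dec; apply Rabs_def1; lra).
      specialize (Hdd u Hud). apply Rabs_def2 in Hdd. lra. }
    specialize (Hub t' Et'). unfold t', Rmin in Hub; destruct Rle_dec; lra.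
Qed.

Lemma closure_T (h : R -> R) T : 0 < T -> continuous h T ->
  (forall t, 0 <= t < T -> 0 < h t) -> 0 <= h T.
Proof.
  intros HT Hc Hp. destruct (Rle_or_lt 0 (h T)); auto. exfalso.
  destruct (cont_eps h T Hc (- h T)) as [d [Hdp Hdd]]; [lra|].
  set (y := Rmax (T - d/2) 0).
  assert (Hy1 : 0 <= y < T) by (unfold y; unfold Rmax; destruct Rle_dec; lra).
  assert (Hy2 : Rabs (y - T) < d) by (unfold y, Rmax; destruct Rle_dec; apply Rabs_def1; lra).
  specialize (Hdd y Hy2). specialize (Hp y Hy1). apply Rabs_def2 in Hdd. lra.
Qed.

Lemma barrier_full (h : R -> R) (T : R) : 0 < T ->
  0 < h 0 ->
  (forall t, 0 <= t <= T -> continuous h t) ->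
  (forall t, 0 < t < T -> h t = 0 -> exists d, is_derive h t d /\ 0 < d) ->
  forall t, 0 <= t <= T -> 0 <= h t.
Proof.
  intros HT H0 Hc Hd t Ht.
  destruct (Req_dec t T) as [->|Hne].
  - apply closure_T; [exact HT| apply Hc; lra |]. intros; apply (barrier h T); auto.
  - left. apply (barrier h T); auto. lra.
Qed.

Lemma fpos (f : R -> R) k : periodic1 f -> (forall t, 0 <= t <= 1 -> k <= f t) ->
  forall x, 0 <= x -> k <= f x.
Proof.
  intros Hp Hk.
  assert (Hn : forall n : nat, forall x, 0 <= x <= INR n + 1 -> k <= f x).
  { induction n as [|n IH]; intros x Hx.
    - apply Hk. simpl in Hx. lra.
    - destruct (Rle_or_lt x 1). apply Hk; lra.
      replace x with ((x - 1) + 1) by ring. rewrite Hp. apply IH.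
      rewrite S_INR in Hx. lra. }
  intros x Hx. destruct (archimed x) as [H1 H2].
  apply (Hn (Z.to_nat (up x))). split; auto.
  rewrite INR_IZR_INZ, Z2Nat.id. lra.
  apply le_IZR. lra.
Qed.

Lemma bound_cont (g : R -> R) a b : a <= b -> (forall x, a <= x <= b -> continuous g x) ->
  exists M, forall x, a <= x <= b -> g x <= M.
Proof.
  intros Hab Hc. destruct (continuity_ab_maj g a b Hab) as [Mx [HM _]].
  intros c Hc'. apply continuity_pt_filterlim. apply Hc; auto.
  exists (g Mx); auto.
Qed.

Lemma dF (f : R -> R) th t : ex_derive f (th * t) ->
  is_derive (fun t => f (th * t)) t (th * Derive f (th * t)).
Proof.
  intros H. apply (is_derive_comp f (fun t => th * t) t (Derive f (th*t)) th).
  apply Derive_correct; auto.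
  auto_derive; auto. ring.
Qed.

Lemma dB (f : R -> R) th t k : ex_derive f (th * t) -> f (th * t) <> 0 ->
  is_derive (fun t => k / f (th * t)) t (k * (- (th * Derive f (th * t)) / f (th * t) ^ 2)).
Proof.
  intros H Hn. apply (is_derive_scal (fun t => / f (th * t))). apply (is_derive_inv (fun t => f (th * t))); auto. apply dF; auto.
Qed.

Lemma frac_bound D L p k : 0 < k -> k <= p -> D <= L -> 0 <= L -> D / p ^ 2 <= L / k ^ 2.
Proof.
  intros Hk Hp HD HL. unfold Rdiv.
  assert (0 < k ^ 2) by (apply pow_lt; auto).
  assert (k ^ 2 <= p ^ 2) by (apply pow_incr; lra).
  apply Rle_trans with (L * / p ^ 2).
  - apply Rmult_le_compat_r; auto. apply Rlt_le, Rinv_0_lt_compat; lra.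
  - apply Rmult_le_compat_l; auto. apply Rinv_le_contravar; auto.
Qed.

Lemma dconst (c x : R) : is_derive (fun _ : R => c) x 0.
Proof. exact (@is_derive_const R_AbsRing R_NormedModule c x). Qed.

Lemma dminus (f g : R -> R) x df dg : is_derive f x df -> is_derive g x dg ->
  is_derive (fun y => f y - g y) x (df - dg).
Proof. intros. apply (is_derive_minus f g); auto. Qed.

Lemma dplus (f g : R -> R) x df dg : is_derive f x df -> is_derive g x dg ->
  is_derive (fun y => f y + g y) x (df + dg).
Proof. intros. apply (is_derive_plus f g); auto. Qed.

Lemma dQ (A e c u : R) : e + c * u <> 0 ->
  is_derive (fun s => A * e ^ 2 / (e + c * s)) u (- (A * e ^ 2 * c / (e + c * u) ^ 2)).
Proof. intros H. auto_derive; auto. field; auto. Qed.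

Theorem lemma1 (a b T theta : R) (f : R -> R) (gamma : R -> R -> R) :
  0 < a -> 0 < b -> 0 < T -> 0 < theta ->
  periodic1 f -> C2 f ->
  (exists kappa, 0 < kappa /\ forall t, 0 <= t <= 1 -> kappa <= f t) ->
  (forall eps, 0 < eps -> riccati_solution a b theta eps T f (gamma eps)) ->
  forall t0, 0 < t0 <= T ->
  exists C eps0, 0 < eps0 /\
    forall eps, 0 < eps < eps0 ->
      forall t, t0 <= t <= T ->
        Rabs (gamma eps t - b * eps / f (theta * t)) <= C * eps ^ 2.
Proof.
  intros Ha Hb HT Hth Hper HC2 [k [Hk Hkf]] Hric t0 Ht0.
  assert (fk : forall x, 0 <= x -> k <= f x) by (apply fpos; auto).
  assert (Hth0 : 0 <= theta * T) by nra.
  destruct (bound_cont f 0 (theta * T) Hth0) as [M0 HM0].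
  { intros x _. apply (@ex_derive_continuous R_AbsRing R_NormedModule f x). apply HC2. }
  destruct (bound_cont (Derive f) 0 (theta * T) Hth0) as [Mp HMp].
  { intros x _. apply (@ex_derive_continuous R_AbsRing R_NormedModule (Derive f) x). apply HC2. }
  destruct (bound_cont (fun x => - Derive f x) 0 (theta * T) Hth0) as [Mm HMm].
  { intros x _. apply (continuous_opp (Derive f)). apply (@ex_derive_continuous R_AbsRing R_NormedModule (Derive f) x). apply HC2. }
  set (M1 := Rmax (Rmax Mp Mm) 0).
  assert (HM1 : 0 <= M1) by apply Rmax_r.
  assert (HD : forall x, 0 <= x <= theta * T -> - M1 <= Derive f x <= M1).
  { intros x Hx. specialize (HMp x Hx). specialize (HMm x Hx).
    assert (Mp <= M1) by (unfold M1; eapply Rle_trans; [apply Rmax_l|apply Rmax_l]).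
    assert (Mm <= M1) by (unfold M1; eapply Rle_trans; [apply Rmax_r|apply Rmax_l]).
    lra. }
  assert (HM0p : k <= M0) by (apply Rle_trans with (f 0); [apply fk; lra| apply HM0; lra]).
  set (L := theta * M1).
  assert (HL : 0 <= L) by (unfold L; nra).
  assert (HthD : forall x, 0 <= x <= theta * T -> - L <= theta * Derive f x <= L).
  { intros x Hx. destruct (HD x Hx). unfold L; split; nra. }
  set (K := 2 * a / k ^ 2 + L / k ^ 3 + 1).
  set (A := b / k + 1).
  set (c := b * k / 2).
  assert (Hc : 0 < c) by (unfold c; nra).
  assert (HA : 0 < A) by (unfold A; assert (0 < b / k) by (apply Rdiv_lt_0_compat; auto); lra).
  assert (HK : 0 < K).
  { unfold K. assert (0 < 2 * a / k ^ 2) by (apply Rdiv_lt_0_compat; [lra| apply pow_lt; auto]).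
    assert (0 <= L / k ^ 3) by (apply Rmult_le_pos; [auto| apply Rlt_le, Rinv_0_lt_compat, pow_lt; auto]). lra. }
  assert (HKk : K * k = 2*a/k + L/k^2 + k) by (unfold K; field; lra).
  exists (K + A / (c * t0)), 1. split; [lra|].
  intros eps [He _] t Ht.
  destruct (Hric eps He) as [g0 [gc gd]].
  set (g := gamma eps) in *.
  assert (Hfp : forall s, 0 <= s <= T -> k <= f (theta * s) <= M0).
  { intros s Hs. split. apply fk; nra. apply HM0; split; nra. }
  assert (gnn : forall s, 0 <= s <= T -> 0 <= g s).
  { intros s Hs.
  assert (Heta : forall eta, 0 < eta -> eta * M0 < b * eps -> 0 <= g s + eta).
  { intros eta He1 He2.
    apply (barrier_full (fun s => g s + eta) T HT); [ | | | exact Hs].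
    - rewrite g0; lra.
    - intros u Hu. apply (continuous_plus g (fun _ => eta)); [apply gc; auto | apply continuous_const].
    - intros u Hu Hz. exists (-2 * a * g u - g u ^ 2 * f (theta * u) ^ 2 / eps ^ 2 + b ^ 2 + 0). split.
      + apply (dplus g (fun _ => eta)). apply gd; auto. apply dconst.
      + assert (gu : g u = - eta) by lra. rewrite gu.
        destruct (Hfp u ltac:(lra)) as [Hp1 Hp2].
        set (p := f (theta*u)) in *.
        replace ((- eta) ^ 2 * p ^ 2 / eps ^ 2) with ((eta * p / eps)^2) by (field; lra).
        assert (Hq1 : 0 <= eta * p / eps) by (apply Rmult_le_pos; [nra | apply Rlt_le, Rinv_0_lt_compat; auto]).
        assert (Hq2 : eta * p / eps < b).
        { apply Rmult_lt_reg_r with eps; auto. unfold Rdiv. rewrite Rmult_assoc, Rinv_l by lra. nra. }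
        nra. }
  destruct (Rle_or_lt 0 (g s)) as [|Hneg]; auto. exfalso.
  set (eta := Rmin (- g s) (b * eps / M0) / 2).
  assert (Q1 : 0 < b*eps/M0) by (apply Rdiv_lt_0_compat; nra).
  assert (Q2 : 0 < Rmin (- g s) (b * eps / M0)) by (apply Rmin_glb_lt; lra).
  assert (Q3 : Rmin (- g s) (b*eps/M0) <= - g s) by apply Rmin_l.
  assert (Q4 : Rmin (- g s) (b*eps/M0) <= b*eps/M0) by apply Rmin_r.
  assert (Q5 : eta * M0 < b * eps). { unfold eta. assert (b*eps/M0*M0 = b*eps) by (field; lra). nra. }
  specialize (Heta eta ltac:(unfold eta; lra) Q5). unfold eta in Heta. lra. }
  assert (fnz : forall s, 0 <= s <= T -> f (theta * s) <> 0) by (intros s Hs; destruct (Hfp s Hs); lra).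
  assert (HdB : forall u, 0 <= u <= T -> is_derive (fun s => b*eps/f(theta*s)) u (b * eps * (- (theta * Derive f (theta * u)) / f (theta * u) ^ 2))).
  { intros u Hu. apply dB. apply HC2. apply fnz; auto. }
  assert (gup : forall s, 0 <= s <= T -> 0 <= b * eps / f (theta * s) + K * eps ^ 2 - g s).
  { intros s Hs.
    assert (Hdu : forall u, 0 <= u <= T -> is_derive (fun s => b*eps/f(theta*s) + K*eps^2) u (b * eps * (- (theta * Derive f (theta * u)) / f (theta * u) ^ 2) + 0)).
    { intros u Hu. apply (dplus (fun s => b*eps/f(theta*s)) (fun _ => K*eps^2)). apply HdB; auto. apply dconst. }
    apply (barrier_full (fun s => b * eps / f (theta * s) + K * eps ^ 2 - g s) T HT); [ | | | exact Hs].
    - rewrite g0, Rmult_0_r. assert (0 < b*eps/f 0) by (apply Rdiv_lt_0_compat; [nra| apply Rlt_le_trans with k; auto; apply fk; lra]). nra.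
    - intros u Hu. apply (continuous_minus (fun s => b*eps/f(theta*s) + K*eps^2) g). apply (@ex_derive_continuous R_AbsRing R_NormedModule). eexists; apply Hdu; auto. apply gc; auto.
    - intros u Hu Hz. eexists. split.
      + apply (dminus (fun s => b*eps/f(theta*s) + K*eps^2) g). apply Hdu; lra. apply gd; auto.
      + idtac.
        assert (gu : g u = b*eps/f(theta*u) + K*eps^2) by lra. rewrite gu.
        destruct (Hfp u ltac:(lra)) as [Hp1 Hp2]. destruct (HthD (theta*u) ltac:(split; nra)) as [HD1 HD2].
        set (p := f (theta*u)) in *. set (D := theta * Derive f (theta*u)) in *.
        replace ((b*eps/p + K*eps^2)^2 * p^2/eps^2) with ((b + K*eps*p)^2) by (field; lra).
        assert (W : D / p^2 <= L / k^2) by (apply frac_bound; auto).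
        assert (Hbp : 0 < b*eps/p) by (apply Rdiv_lt_0_compat; nra).
        assert (E1 : b*eps*(-D/p^2) = - (b*eps*(D/p^2))) by (field; lra).
        rewrite E1.
        assert (E2 : b*eps*(D/p^2) <= b*eps*(L/k^2)) by (apply Rmult_le_compat_l; nra).
        assert (E3 : K*k <= K*p) by nra.
        assert (E4 : b*eps*(K*k) <= b*eps*(K*p)) by (apply Rmult_le_compat_l; nra).
        rewrite HKk in E4.
        assert (E5 : 0 < b*eps*k) by (repeat apply Rmult_lt_0_compat; lra).
        assert (E6 : 0 <= (K*eps*p)^2) by nra.
        assert (E7 : 0 < a * (b*eps/p)) by (apply Rmult_lt_0_compat; lra).
        assert (E8 : 0 < a * (K*eps^2)) by (apply Rmult_lt_0_compat; [lra| apply Rmult_lt_0_compat; [lra| apply pow_lt; lra]]).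
        assert (E9 : 0 <= b*eps*(2*a/k)) by (apply Rmult_le_pos; [nra| apply Rlt_le, Rdiv_lt_0_compat; lra]).
        assert (E10 : 0 <= b * eps * (L / k ^ 2)) by (apply Rmult_le_pos; [nra| apply Rmult_le_pos; [lra| apply Rlt_le, Rinv_0_lt_compat, pow_lt; lra]]).
        replace ((b + K * eps * p) ^ 2) with (b ^ 2 + 2 * (b * eps * (K * p)) + (K * eps * p) ^ 2) by ring.
        rewrite !Rmult_plus_distr_l in E4.
        replace (-2 * a * (b * eps / p + K * eps ^ 2)) with (-2 * (a * (b * eps / p)) - 2 * (a * (K * eps ^ 2))) by ring.
        generalize dependent (b * eps * (D / p ^ 2)).
        generalize dependent (b * eps * (K * p)).
        generalize dependent (K * eps * p).
        generalize dependent (a * (b * eps / p)).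
        generalize dependent (a * (K * eps ^ 2)).
        generalize dependent (b * eps * (2 * a / k)).
        generalize dependent (b * eps * (L / k ^ 2)).
        generalize dependent (b * eps * k). intros.
        assert (0 <= r4 ^ 2) by apply pow2_ge_0. clear -E5 E9 E8 E7 E6 E4 E2 E10. lra. }
  assert (glo : forall s, 0 <= s <= T -> 0 <= g s - (b * eps / f (theta * s) - K * eps ^ 2 - A * eps ^ 2 / (eps + c * s))).
  { intros s Hs.
    assert (Hdl : forall u, 0 <= u <= T -> is_derive (fun s => b * eps / f (theta * s) - K * eps ^ 2 - A * eps ^ 2 / (eps + c * s)) u
       (b * eps * (- (theta * Derive f (theta * u)) / f (theta * u) ^ 2) - 0 - (- (A * eps ^ 2 * c / (eps + c * u) ^ 2)))).
    { intros u Hu. apply (dminus (fun s => b * eps / f (theta * s) - K * eps ^ 2)).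
      apply (dminus (fun s => b * eps / f (theta * s))). apply HdB; auto. apply dconst.
      apply dQ. nra. }
    apply (barrier_full (fun s => g s - (b * eps / f (theta * s) - K * eps ^ 2 - A * eps ^ 2 / (eps + c * s))) T HT); [ | | | exact Hs].
    - rewrite g0, !Rmult_0_r, Rplus_0_r.
      replace (A * eps ^ 2 / eps) with (A * eps) by (field; lra).
      assert (f0 : k <= f 0) by (apply fk; lra).
      assert (Hb0 : b * eps / f 0 <= b * eps / k).
      { unfold Rdiv. apply Rmult_le_compat_l. nra. apply Rinv_le_contravar; lra. }
      assert (Hb1 : b * eps / k + eps = A * eps) by (unfold A; field; lra).
      assert (0 < K * eps ^ 2) by (apply Rmult_lt_0_compat; [lra| apply pow_lt; lra]).
      lra.
    - intros u Hu. apply (continuous_minus g (fun s => b * eps / f (theta * s) - K * eps ^ 2 - A * eps ^ 2 / (eps + c * s))).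
      apply gc; auto. apply (@ex_derive_continuous R_AbsRing R_NormedModule). eexists; apply Hdl; auto.
    - intros u Hu Hz. eexists. split.
      + apply (dminus g (fun s => b * eps / f (theta * s) - K * eps ^ 2 - A * eps ^ 2 / (eps + c * s))). apply gd; auto. apply Hdl; lra.
      + assert (gpos : 0 <= g u) by (apply gnn; lra).
        assert (gu : g u = b * eps / f (theta * u) - K * eps ^ 2 - A * eps ^ 2 / (eps + c * u)) by lra.
        destruct (Hfp u ltac:(lra)) as [Hp1 Hp2]. destruct (HthD (theta*u) ltac:(split; nra)) as [HD1 HD2].
        set (p := f (theta*u)) in *. set (D := theta * Derive f (theta*u)) in *.
        assert (Hqp : eps <= eps + c * u) by nra.
        set (q := eps + c * u) in *.
        set (Z1 := A * eps / q).
        assert (HZ1 : 0 < Z1) by (unfold Z1; apply Rdiv_lt_0_compat; nra).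
        set (psi := K * eps + Z1).
        assert (Hpsi : 0 < psi) by (unfold psi; nra).
        assert (Hl : b * eps / p - K * eps ^ 2 - A * eps ^ 2 / q = b * eps / p - eps * psi) by (unfold psi, Z1; field; lra).
        rewrite Hl in gu. rewrite gu. rewrite gu in gpos.
        replace ((b * eps / p - eps * psi) ^ 2 * p ^ 2 / eps ^ 2) with ((b - p * psi) ^ 2) by (field; lra).
        assert (Hy : 0 <= b - p * psi).
        { replace (b - p * psi) with ((b * eps / p - eps * psi) * (p / eps)) by (field; lra).
          apply Rmult_le_pos; auto. apply Rlt_le, Rdiv_lt_0_compat; lra. }
        assert (I1a : 0 <= (p * psi) * (b - p * psi)) by (apply Rmult_le_pos; nra).
        assert (I1b : k * psi <= p * psi) by nra.
        assert (I2a : 0 <= eps * psi) by nra.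
        assert (I2b : b * eps / p <= b * eps / k).
        { unfold Rdiv. apply Rmult_le_compat_l. nra. apply Rinv_le_contravar; lra. }
        assert (I2 : a * (b * eps / p - eps * psi) <= a * (b * eps / k)) by (apply Rmult_le_compat_l; lra).
        assert (I3a : (- D) / p ^ 2 <= L / k ^ 2) by (apply frac_bound; auto; lra).
        assert (I3 : b * eps * (- D / p ^ 2) <= b * eps * (L / k ^ 2)) by (apply Rmult_le_compat_l; nra).
        assert (I4a : A * eps ^ 2 * c / q ^ 2 = c * Z1 * (eps / q)) by (unfold Z1; field; lra).
        assert (I4b : eps / q <= 1) by (apply Rmult_le_reg_r with q; [lra|]; unfold Rdiv; rewrite Rmult_assoc, Rinv_l; lra).
        assert (I4c : 0 < eps / q) by (apply Rdiv_lt_0_compat; lra).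
        assert (I4 : A * eps ^ 2 * c / q ^ 2 <= c * Z1) by (rewrite I4a; rewrite <- (Rmult_1_r (c * Z1)) at 2; apply Rmult_le_compat_l; [apply Rlt_le, Rmult_lt_0_compat|]; lra).
        assert (I5 : b * (k * psi) = b * eps * (K * k) + b * k * Z1) by (unfold psi; ring).
        rewrite HKk in I5.
        assert (I6 : 2 * (a * (b * eps / k)) = b * eps * (2 * a / k)) by (field; lra).
        assert (I7 : b * (k * psi) <= b * (p * psi)) by (apply Rmult_le_compat_l; lra).
        assert (I8 : (b - p * psi) ^ 2 = b ^ 2 - 2 * b * (p * psi) + (p * psi) * (p * psi)) by ring.
        assert (I9 : 0 < b * eps * k) by (repeat apply Rmult_lt_0_compat; lra).
        assert (I10 : 0 < b * k * Z1) by (apply Rmult_lt_0_compat; [apply Rmult_lt_0_compat|]; lra).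
        assert (I11 : c * Z1 = b * k * Z1 / 2) by (unfold c; field).
        lra. }
  assert (Hq : A * eps ^ 2 / (eps + c * t) <= A / (c * t0) * eps ^ 2).
  { unfold Rdiv. replace (A * / (c * t0) * eps ^ 2) with (A * eps ^ 2 * / (c * t0)) by ring.
    apply Rmult_le_compat_l. apply Rmult_le_pos; [lra| apply pow_le; lra].
    apply Rinv_le_contravar. nra. nra. }
  specialize (gup t ltac:(lra)). specialize (glo t ltac:(lra)).
  clearbody K A c.
  set (X := b * eps / f (theta * t)) in *.
  set (Y := A * eps ^ 2 / (eps + c * t)) in *.
  set (Z := A / (c * t0)) in *.
  apply Rabs_le. split.
  lra. assert (0 <= Z * eps ^ 2). { apply Rmult_le_pos; [unfold Z; apply Rlt_le, Rdiv_lt_0_compat; nra | nra]. } lra.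
Qed.
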